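(* Let $f : \widehat{\mathbb{Z}} \to \widehat{\mathbb{Z}}$ be congruence stable, let $P$ be a period map of $f$, and let $\mu : \mathbb{N} \to \mathbb{N}$ be a map such that for every $n \in \mathbb{N}$ there is $k \in \mathbb{N}$ with $\mu(n) = P^k(n) = P^{k+1}(n)$. Let $\lambda : \mathbb{N} \to \mathbb{N}$ be defined by $\lambda(n) = $ the period of the reduction $f_{\mu(n)} : \mathbb{Z}/\mu(n)\mathbb{Z} \to \mathbb{Z}/\mu(n)\mathbb{Z}$. Then $\lambda$ is a period map of $f{\Uparrow}_x$ for every $x \in \widehat{\mathbb{Z}}$. Moreover, for all $x, y, s \in \widehat{\mathbb{Z}}$ and $n \in \mathbb{N}$, if $x \equiv_{\mu(n)} y$ then $f{\Uparrow}_x(s) \equiv_n f{\Uparrow}_y(s)$.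
   Context: $\mathbb{N} = \{1,2,\dots\}$, $\widehat{\mathbb{Z}} = \varprojlim_n \mathbb{Z}/n\mathbb{Z}$; $s \equiv_n t$ means $s-t\in n\widehat{\mathbb{Z}}$; $\widehat{\cdot}:\mathbb{N}\to\widehat{\mathbb{Z}}$ is the natural embedding. For continuous $f:\widehat{\mathbb{Z}}\to\widehat{\mathbb{Z}}$, a map $P:\mathbb{N}\to\mathbb{N}$ is a period map of $f$ if $s \equiv_{P(n)} t$ implies $f(s)\equiv_n f(t)$; then $f$ induces reductions $f_n:\mathbb{Z}/P(n)\mathbb{Z}\to\mathbb{Z}/n\mathbb{Z}$ (so $f_{\mu(n)}$ is a self-map of $\mathbb{Z}/\mu(n)\mathbb{Z}$ since $P(\mu(n))=\mu(n)$). $f$ is congruence stable if some period map $P$ satisfies $P^k(n)=P^{k+1}(n)$ for all large $k$, for each $n$. The period of a self-map $\sigma$ of a finite set is the least common multiple over all points $y$ of the cycle length of $y$ (the least $l\ge1$ with $\sigma^k(y)=\sigma^{k+l}(y)$ for some $k\ge0$). For congruence stable $f$ and $x \in \widehat{\mathbb{Z}}$, the map $f{\Uparrow}_x : \widehat{\mathbb{Z}} \to \widehat{\mathbb{Z}}$ is defined by $f{\Uparrow}_x(s) = \lim_{i\to\infty} f^{n_i}(x)$, where $(n_i)$ is any sequence of positive integers with $n_i \to +\infty$ in $\mathbb{R}$ and $\widehat{n_i}\to s$ in $\widehat{\mathbb{Z}}$; for congruence stable $f$ this limit exists and is independent of the chosen sequence, and $f{\Uparrow}_x$ is continuous. *)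

(* Defs.v *)
From mathcomp Require Import all_boot.
Set Implicit Arguments. Unset Strict Implicit. Unset Printing Implicit Defensive.

(* The profinite integers Zhat = lim_n Z/nZ, represented as compatible families
   of residues: zval x n is the residue of x modulo n (for n >= 1), in [0, n). *)
Definition compat (x : nat -> nat) : Prop :=
  x 0 = 0 /\ (forall n, 0 < n -> x n < n) /\
  (forall m n, 0 < m -> 0 < n -> m %| n -> x m = x n %% m).

Record Zhat := MkZhat { zval : nat -> nat; zvalP : compat zval }.

(* s =_n t in Zhat, i.e. s - t \in n Zhat, i.e. s and t have the same image in Z/nZ *)
Definition zeqmod (n : nat) (s t : Zhat) : Prop := zval s n = zval t n.

Definition hatf (a : nat) (n : nat) : nat := if n is 0 then 0 else a %% n.

Lemma hatf_compat a : compat (hatf a).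
Proof.
split; first by [].
split; first by case=> [|n] // _; rewrite /hatf ltn_mod.
by case=> [|m] // [|n] // _ _ H; rewrite /hatf modn_dvdm.
Qed.

Definition hat (a : nat) : Zhat := MkZhat (hatf_compat a).

Definition zcontinuous (f : Zhat -> Zhat) : Prop :=
  forall s n, 0 < n -> exists2 m, 0 < m & forall t, zeqmod m t s -> zeqmod n (f t) (f s).

Definition period_map (f : Zhat -> Zhat) (P : nat -> nat) : Prop :=
  (forall n, 0 < n -> 0 < P n) /\
  (forall n s t, 0 < n -> zeqmod (P n) s t -> zeqmod n (f s) (f t)).

Definition congruence_stable (f : Zhat -> Zhat) : Prop :=
  zcontinuous f /\
  exists P, period_map f P /\
    forall n, 0 < n -> exists K, forall k, K <= k -> iter k P n = iter k.+1 P n.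

(* the reduction f_m : Z/P(m)Z -> Z/mZ, on residues a in [0, P(m)) *)
Definition reduction (f : Zhat -> Zhat) (m : nat) (a : nat) : nat := zval (f (hat a)) m.

Definition is_cycle_length (sigma : nat -> nat) (y l : nat) : Prop :=
  0 < l /\ (exists k, iter k sigma y = iter (k + l) sigma y) /\
  (forall l', 0 < l' -> (exists k, iter k sigma y = iter (k + l') sigma y) -> l <= l').

Definition is_period (sigma : nat -> nat) (m L : nat) : Prop :=
  exists cl : nat -> nat,
    (forall y, y < m -> is_cycle_length sigma y (cl y)) /\
    L = \big[lcmn/1]_(y < m) cl y.

Definition zconverges (u : nat -> Zhat) (l : Zhat) : Prop :=
  forall n, 0 < n -> exists N, forall i, N <= i -> zeqmod n (u i) l.

(* g is f^{Uparrow}_x : g s = lim f^{n_i}(x) for every sequence of positive integers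
   n_i -> +oo (in R) with hat(n_i) -> s in Zhat *)
Definition is_uparrow (f : Zhat -> Zhat) (x : Zhat) (g : Zhat -> Zhat) : Prop :=
  forall (s : Zhat) (ns : nat -> nat),
    (forall i, 0 < ns i) ->
    (forall M, exists N, forall i, N <= i -> M <= ns i) ->
    zconverges (fun i => hat (ns i)) s ->
    zconverges (fun i => iter (ns i) f x) (g s).

(* Main.v *)
Require Import Defs.
From mathcomp Require Import all_boot.
From mathcomp Require Import zify.
From Stdlib Require Import Lia.

Lemma zval_hat a n : 0 < n -> zval (hat a) n = a %% n.
Proof. by case: n. Qed.

Lemma zval_lt (x : Zhat) n : 0 < n -> zval x n < n.
Proof. by case: x => z [_ [H _]] /= /H. Qed.

Lemma zval_dvd (x : Zhat) m n : 0 < m -> 0 < n -> m %| n -> zval x m = zval x n %% m.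
Proof. by case: x => z [_ [_ H]] /=; apply: H. Qed.

Lemma iterP_gt0 f P j n : period_map f P -> 0 < n -> 0 < iter j P n.
Proof. move=> HP n0; elim: j => //= j IH; exact: HP.1. Qed.

Lemma iter_period f P j n u v : period_map f P -> 0 < n ->
  zeqmod (iter j P n) u v -> zeqmod n (iter j f u) (iter j f v).
Proof.
move=> HP; elim: j n u v => [|j IH] n u v n0 H //.
rewrite iterSr in H.
have := IH (P n) u v (HP.1 n n0) H.
exact: HP.2 n _ _ n0.
Qed.

Lemma iter_fix (P : nat -> nat) m j : P m = m -> iter j P m = m.
Proof. by move=> Pm; elim: j => //= j ->. Qed.

Lemma seq_exists s : exists ns : nat -> nat,
  [/\ (forall i, 0 < ns i), (forall i, i <= ns i) & zconverges (fun i => hat (ns i)) s].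
Proof.
exists (fun i => zval s (i`!) + i`! * i.+1); split.
- move=> i; have := fact_gt0 i; lia.
- move=> i; have := fact_gt0 i; nia.
move=> n n0; exists n => i ni; rewrite /zeqmod zval_hat //.
have d : n %| i`! by apply: dvdn_fact; rewrite n0.
rewrite -modnDm (eqP (dvdn_mulr _ d)) addn0 modn_mod.
by rewrite -zval_dvd // fact_gt0.
Qed.

Lemma A1 q k0 l c : q + k0 + (l + c*l) = q + c*l + k0 + l. Proof. lia. Qed.
Lemma A2 q k0 l c : q + k0 + c*l = q + c*l + k0. Proof. lia. Qed.
Lemma A3 u w k0 c l : k0 <= u -> u <= w -> w - u = c * l -> w = (u - k0) + k0 + c * l.
Proof. lia. Qed.

Lemma tends_of {ns : nat -> nat} : (forall i, i <= ns i) ->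
  forall M, exists N, forall i, N <= i -> M <= ns i.
Proof. by move=> H M; exists M => i Mi; apply: leq_trans Mi (H i). Qed.

Theorem proposition3p8 (f : Zhat -> Zhat) (P mu lambda : nat -> nat)
  (Hf : congruence_stable f) (HP : period_map f P)
  (Hmu : forall n, 0 < n -> exists k, 0 < k /\ mu n = iter k P n /\ mu n = iter k.+1 P n)
  (Hlambda : forall n, 0 < n -> is_period (reduction f (mu n)) (mu n) (lambda n))
  (up : Zhat -> Zhat -> Zhat) (Hup : forall x, is_uparrow f x (up x)) :
  (forall x, period_map (up x) lambda) /\
  (forall x y s n, 0 < n -> zeqmod (mu n) x y -> zeqmod n (up x s) (up y s)).
Proof.
have Hm : forall n, 0 < n -> exists k, [/\ 0 < mu n, P (mu n) = mu n &
    forall u v j, zeqmod (mu n) u v -> zeqmod n (iter k f (iter j f u)) (iter k f (iter j f v))].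
  move=> n n0; have [k [_ [E1 E2]]] := Hmu n n0.
  have m0 : 0 < mu n by rewrite E1; exact: (@iterP_gt0 f P k n HP n0).
  have Pm : P (mu n) = mu n by rewrite {2}E2 /= -E1.
  exists k; split => // u v j H.
  apply: (@iter_period f P k n _ _ HP n0); rewrite -E1.
  by apply: (@iter_period f P j (mu n) u v HP); rewrite ?iter_fix.
split; last first.
  move=> x y s n n0 Hxy; have [k [m0 Pm Hk]] := Hm n n0.
  have [ns [ns0 nsi nsc]] := seq_exists s.
  have [N1 H1] := Hup x s ns ns0 (tends_of nsi) nsc n n0.
  have [N2 H2] := Hup y s ns ns0 (tends_of nsi) nsc n n0.
  set i := maxn (maxn N1 N2) k.
  have := H1 i; have := H2 i; rewrite /zeqmod => <-; last by rewrite /i; lia.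
  move=> <-; last by rewrite /i; lia.
  have ki : k <= ns i by apply: leq_trans (nsi i); rewrite /i; lia.
  rewrite -(subnKC ki) !iterD; exact: Hk.
move=> x; split.
  move=> n n0; have [cl [Hcl ->]] := Hlambda n n0.
  apply: (big_ind (fun v => 0 < v)) => // [a b a0 b0|y _].
    by rewrite lcmn_gt0 a0.
  by case: (Hcl y (ltn_ord y)).
move=> n s t n0 Hst; have [k [m0 Pm Hk]] := Hm n n0.
have [cl [Hcl HL]] := Hlambda n n0.
set m := mu n in m0 Pm Hk Hcl HL.
set L := lambda n in HL Hst.
set sigma := reduction f m in Hcl.
pose a i := zval (iter i f x) m.
have Ha : forall i, a i = iter i sigma (a 0).
  elim=> // i IH; rewrite /= -IH /sigma /reduction /a /=.
  have : zeqmod (P m) (iter i f x) (hat (zval (iter i f x) m)).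
    by rewrite Pm /zeqmod zval_hat // modn_small // zval_lt.
  by move/(HP.2 m _ _ m0).
have y0m : a 0 < m by apply: zval_lt.
have [l0 [[k0 Hk0] _]] := Hcl _ y0m.
have lL : cl (a 0) %| L.
  rewrite HL (bigD1 (Ordinal y0m)) //=; exact: dvdn_lcml.
have L0 : 0 < L.
  rewrite HL; apply: (big_ind (fun v => 0 < v)) => // [a1 b a0 b0|y _].
    by rewrite lcmn_gt0 a0.
  by case: (Hcl y (ltn_ord y)).
set l := cl (a 0) in l0 Hk0 lL.
have per1 : forall q, iter (q + k0) sigma (a 0) = iter (q + k0 + l) sigma (a 0).
  by move=> q; rewrite -addnA iterD [RHS]iterD Hk0.
have perc : forall q c, iter (q + k0) sigma (a 0) = iter (q + k0 + c * l) sigma (a 0).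
  move=> q; elim=> [|c IH]; first by rewrite addn0.
  by rewrite IH mulSn A1 -per1 A2.
have perw : forall u w, k0 <= u -> u <= w -> L %| w - u -> a u = a w.
  move=> u w ku uw /(dvdn_trans lL) /dvdnP [c Hc].
  by rewrite (Ha u) (Ha w) (A3 _ _ _ _ _ ku uw Hc) -perc subnK.
have perm : forall u w, k0 <= u -> k0 <= w -> u = w %[mod L] -> a u = a w.
  move=> u w ku kw E; case: (leqP u w) => uw.
    by apply: perw => //; rewrite -eqn_mod_dvd // E.
  apply/esym/perw => //; [exact: ltnW | rewrite -eqn_mod_dvd ?E //; exact: ltnW].
have [ns [ns0 nsi nsc]] := seq_exists s.
have [nt [nt0 nti ntc]] := seq_exists t.
have [N1 H1] := Hup x s ns ns0 (tends_of nsi) nsc n n0.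
have [N2 H2] := Hup x t nt nt0 (tends_of nti) ntc n n0.
have [N3 H3] := nsc L L0.
have [N4 H4] := ntc L L0.
set i := maxn (maxn (maxn N1 N2) (maxn N3 N4)) (k + k0).
have iN1 : N1 <= i by rewrite /i; lia.
have iN2 : N2 <= i by rewrite /i; lia.
have iN3 : N3 <= i by rewrite /i; lia.
have iN4 : N4 <= i by rewrite /i; lia.
have e1 := H1 i iN1; have e2 := H2 i iN2; have e3 := H3 i iN3; have e4 := H4 i iN4.
move: e1 e2 e3 e4; rewrite /zeqmod !zval_hat // Hst => <- <- E e4.
rewrite -{}e4 in E.
have ks : k + k0 <= ns i by apply: leq_trans (nsi i); rewrite /i; lia.
have kt : k + k0 <= nt i by apply: leq_trans (nti i); rewrite /i; lia.
have kks : k <= ns i by lia.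
have kkt : k <= nt i by lia.
rewrite -(subnKC kks) -(subnKC kkt) !iterD.
have : a (ns i - k) = a (nt i - k).
  apply: perm; [lia | lia |].
  apply/eqP; rewrite -(eqn_modDr k) !subnK //; exact/eqP.
move=> Eq; exact: (Hk _ _ 0 Eq).
Qed.
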